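(* Consider the following two-stage zero-sum game between Alice (A) and Bob (B), with a constant $c\in(0,1/3)$. The initial state $X_1$ is uniform on $\{-1,+1\}$; Alice observes $X_1$, Bob observes nothing. At stage 1 Alice chooses $U_1^A\in\{-1,+1\}$ and $X_2=X_1U_1^A$. At stage 2 Bob, observing only $U_1^A$, chooses $U_2^B\in\{\mathrm{U},\mathrm{D}\}$. Alice's rewards are $R_1^A=c$ if $U_1^A=+1$ and $0$ if $U_1^A=-1$; $R_2^A=2$ if $X_2=+1,U_2^B=\mathrm{U}$, $R_2^A=1$ if $X_2=-1,U_2^B=\mathrm{D}$, and $R_2^A=0$ otherwise; Bob's rewards are $R_t^B=-R_t^A$. Then no belief-based equilibrium exists in this game.
   Context: A behavioral strategy profile consists of Alice's map $g_1^A:\{-1,+1\}\to\Delta(\{-1,+1\})$ from $X_1$ to a mixed action and Bob's map $g_2^B:\{-1,+1\}\to\Delta(\{\mathrm{U},\mathrm{D}\})$ from $U_1^A$ to a mixed action; payoffs are expected total rewards; a Bayes–Nash equilibrium (BNE) is a profile where neither player can increase their expected payoff by unilaterally changing strategy. For a profile $g$ and each $u\in\{-1,+1\}$ with $\Pr^g(U_1^A=u)>0$, let $\pi_2^u\in\Delta(\{-1,+1\})$ be the common-information-based belief $\pi_2^u(x)=\Pr^g(X_2=x\mid U_1^A=u)$. A belief-based equilibrium is a BNE $g$ for which there exists a function $\sigma:\Delta(\{-1,+1\})\to\Delta(\{\mathrm{U},\mathrm{D}\})$ with $g_2^B(u)=\sigma(\pi_2^u)$ for every $u$ with $\Pr^g(U_1^A=u)>0$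 (i.e. Bob's stage-2 mixed action depends on his information only through the belief on $X_2$; Bob has no private information, and Alice's stage-1 common-information belief is the fixed prior, so Alice's strategy is unrestricted). *)

(* Defs.v *)
From HB Require Import structures.
From mathcomp Require Import all_boot all_order all_algebra.
From mathcomp Require Import reals.
Set Implicit Arguments. Unset Strict Implicit. Unset Printing Implicit Defensive.
Import Order.TTheory GRing.Theory Num.Theory.
Local Open Scope ring_scope.

(* Encoding conventions:
   - a sign in {-1,+1} is a bool: true = +1, false = -1;
     the product of signs x*u is (x == u).
   - Bob's actions {U,D} are a bool: true = U, false = D.
   - a mixed action on a finite set T is a finitely supported function
     p : {ffun T -> R} with p t >= 0 and \sum_t p t = 1. *)

Definition sign_mul (x u : bool) : bool := x == u.

Definition is_dist (R : realType) (T : finType) (p : {ffun T -> R}) : Prop :=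
  (forall t, 0 <= p t) /\ \sum_t p t = 1.

Definition stratA (R : realType) := bool -> {ffun bool -> R}.  (* X_1 -> Delta{-1,+1} *)
Definition stratB (R : realType) := bool -> {ffun bool -> R}.  (* U_1^A -> Delta{U,D} *)

Definition valid_strat (R : realType) (g : bool -> {ffun bool -> R}) : Prop :=
  forall i, is_dist (g i).

Definition rewA1 (R : realType) (c : R) (u1 : bool) : R := if u1 then c else 0.
Definition rewA2 {R : realType} (x2 b : bool) : R :=
  if x2 then (if b then 2 else 0) else (if b then 0 else 1).

Definition payoffA (R : realType) (c : R) (gA : stratA R) (gB : stratB R) : R :=
  \sum_(x1 : bool) \sum_(u1 : bool) \sum_(b : bool)
     (1 / 2) * gA x1 u1 * gB u1 b * (rewA1 c u1 + rewA2 (R:=R) (sign_mul x1 u1) b).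

Definition payoffB (R : realType) (c : R) (gA : stratA R) (gB : stratB R) : R :=
  \sum_(x1 : bool) \sum_(u1 : bool) \sum_(b : bool)
     (1 / 2) * gA x1 u1 * gB u1 b * (- rewA1 c u1 - rewA2 (R:=R) (sign_mul x1 u1) b).

Definition is_BNE (R : realType) (c : R) (gA : stratA R) (gB : stratB R) : Prop :=
  valid_strat gA /\ valid_strat gB /\
  (forall gA' : stratA R, valid_strat gA' -> payoffA c gA' gB <= payoffA c gA gB) /\
  (forall gB' : stratB R, valid_strat gB' -> payoffB c gA gB' <= payoffB c gA gB).

Definition probU (R : realType) (gA : stratA R) (u : bool) : R :=
  \sum_(x1 : bool) (1 / 2) * gA x1 u.

Definition probXU (R : realType) (gA : stratA R) (x u : bool) : R :=
  \sum_(x1 : bool) (if sign_mul x1 u == x then (1 / 2) * gA x1 u else 0).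

Definition belief2 (R : realType) (gA : stratA R) (u : bool) : {ffun bool -> R} :=
  [ffun x => probXU gA x u / probU gA u].

Definition belief_based_equilibrium (R : realType) (c : R)
    (gA : stratA R) (gB : stratB R) : Prop :=
  is_BNE c gA gB /\
  exists sigma : {ffun bool -> R} -> {ffun bool -> R},
    forall u : bool, 0 < probU gA u -> gB u = sigma (belief2 gA u).

(* Main.v *)
Require Import Defs.
From HB Require Import structures.
From mathcomp Require Import all_boot all_order all_algebra.
From mathcomp Require Import reals.
From mathcomp Require Import ring lra.
Import Order.TTheory GRing.Theory Num.Theory.
Local Open Scope ring_scope.

Section S.
Variable R : realType.
Definition pure (u0 : bool) : {ffun bool -> R} := [ffun u => if u == u0 then 1 else 0].
Definition dev (g : bool -> {ffun bool -> R}) x0 u0 : bool -> {ffun bool -> R} :=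
  fun x => if x == x0 then pure u0 else g x.
Lemma valid_dev g x0 u0 : valid_strat g -> valid_strat (dev g x0 u0).
Proof.
move=> hg x; rewrite /dev; case: (x == x0); last exact: hg.
split; first by move=> t; rewrite ffunE; case: (t == u0).
by rewrite big_bool /= !ffunE; case: u0 => /=; rewrite ?addr0 ?add0r.
Qed.
Lemma payA (c : R) (gA gB : stratA R) : payoffA c gA gB =
  (1/2) * (gA true true * (gB true true * (c + 2) + gB true false * c)
         + gA true false * (gB false true * 0 + gB false false * 1)
         + gA false true * (gB true true * c + gB true false * (c + 1))
         + gA false false * (gB false true * 2 + gB false false * 0)).
Proof. rewrite /payoffA !big_bool /= /rewA1 /rewA2 /sign_mul /=. ring. Qed.
Lemma payB (c : R) (gA gB : stratA R) : payoffB c gA gB = - payoffA c gA gB.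
Proof. rewrite /payoffB /payoffA -sumrN; apply: eq_bigr => x _.
rewrite -sumrN; apply: eq_bigr => u _. rewrite -sumrN; apply: eq_bigr => b _. ring. Qed.
End S.
Theorem proposition3 (R : realType) (c : R) :
  0 < c -> c < 1 / 3 ->
  ~ (exists (gA : stratA R) (gB : stratB R), belief_based_equilibrium c gA gB).
Proof.
move=> c0 c3 [gA [gB [[vA [vB [optA optB]]] [sigma hs]]]].
have hA x0 u0 := optA _ (@valid_dev R gA x0 u0 vA).
have hB x0 u0 := optB _ (@valid_dev R gB x0 u0 vB).
move: (hA true true) (hA true false) (hA false true) (hA false false).
move: (hB true true) (hB true false) (hB false true) (hB false false).
rewrite !payB !payA /dev /pure /= !ffunE /=.
have [nA sA] := vA true; have [nA' sA'] := vA false.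
have [nB sB] := vB true; have [nB' sB'] := vB false.
rewrite big_bool /= in sA. rewrite big_bool /= in sA'. rewrite big_bool /= in sB. rewrite big_bool /= in sB'.
have := nA true; have := nA false; have := nA' true; have := nA' false.
have := nB true; have := nB false; have := nB' true; have := nB' false.
move: sA sA' sB sB'.
move=> sA sA' sB sB' n1 n2 n3 n4 n5 n6 n7 n8 hb1 hb2 hb3 hb4 ha1 ha2 ha3 ha4.
have ea : gA true true = 1/3 /\ gA false true = 2/3 /\ gB true true = 1/3 - c /\ gB false true = 1/3 + c.
  move: sA sA' sB sB' n1 n2 n3 n4 n5 n6 n7 n8 hb1 hb2 hb3 hb4 ha1 ha2 ha3 ha4.
  move: (gA true true) (gA true false) (gA false true) (gA false false) => a1 a0 b1 b0.
  move: (gB true true) (gB true false) (gB false true) (gB false false) => p1 p0 r1 r0.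
  move=> sA sA' sB sB' n1 n2 n3 n4 n5 n6 n7 n8 hb1 hb2 hb3 hb4 ha1 ha2 ha3 ha4.
  have e1 : a0 = 1 - a1 by lra.
  have e2 : b0 = 1 - b1 by lra.
  have e3 : p0 = 1 - p1 by lra.
  have e4 : r0 = 1 - r1 by lra.
  subst a0 b0 p0 r0.
  have f1 : (1 - a1) * (2 * p1 + c - 1 + r1) <= 0 by nra.
  have f2 : 0 <= a1 * (2 * p1 + c - 1 + r1) by nra.
  have f3 : (1 - b1) * (c + 1 - p1 - 2 * r1) <= 0 by nra.
  have f4 : 0 <= b1 * (c + 1 - p1 - 2 * r1) by nra.
  have g1 : 0 <= (1 - p1) * (2 * a1 - b1) by nra.
  have g2 : p1 * (2 * a1 - b1) <= 0 by nra.
  have g3 : 0 <= (1 - r1) * (1 + a1 - 2 * b1) by nra.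
  have g4 : r1 * (1 + a1 - 2 * b1) <= 0 by nra.
  clear -c0 c3 n1 n2 n3 n4 n5 n6 n7 n8 f1 f2 f3 f4 g1 g2 g3 g4.
  have hFp : 2 * a1 - b1 = 0.
    case: (ltrgtP (2 * a1 - b1) 0) => // h.
    - have ep : p1 = 1 by nra.
      subst p1.
      have hb : 0 < b1 by lra.
      have : 0 <= c - 2 * r1 by nra.
      move=> hr.
      have : 0 <= 1 + a1 - 2 * b1 by nra.
      nra.
    - have ep : p1 = 0 by nra.
      subst p1.
      have ha : 0 < a1 by lra.
      have hr : 1 - c <= r1 by nra.
      have : 1 + a1 - 2 * b1 <= 0 by nra.
      nra.
  have hFm : 1 + a1 - 2 * b1 = 0.
    case: (ltrgtP (1 + a1 - 2 * b1) 0) => // h.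
    - have er : r1 = 1 by nra.
      subst r1. nra.
    - have er : r1 = 0 by nra.
      subst r1.
      have eb : b1 = 1 by nra.
      nra.
  have ea : a1 = 1/3 by lra.
  have eb : b1 = 2/3 by lra.
  subst a1 b1.
  have d1 : 2 * p1 + c - 1 + r1 = 0 by nra.
  have d2 : c + 1 - p1 - 2 * r1 = 0 by nra.
  split; first by []. split; first by []. split; lra.
case: ea => ea [eb [ep er]].
have ea0 : gA true false = 2/3 by lra.
have eb0 : gA false false = 1/3 by lra.
have pT : 0 < probU gA true by rewrite /probU big_bool /= ea eb; lra.
have pF : 0 < probU gA false by rewrite /probU big_bool /= ea0 eb0; lra.
have eq : belief2 gA true = belief2 gA false.
  apply/ffunP => x; rewrite !ffunE /probXU /probU !big_bool /= /sign_mul /=.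
  rewrite ea eb ea0 eb0.
  by case: x => /=; field.
have := hs true pT; have := hs false pF.
rewrite -eq => <- /(congr1 (fun f : {ffun bool -> R} => f true)).
rewrite -/(gB true true) -/(gB false true) ep er => h.
lra.
Qed.
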